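(* Let $\beta_1,\beta_2,\gamma_1,\gamma_2>0$ and $0<\sigma_{21}\le\sigma_{12}\le1$ be fixed, and for $\mu>0$ set $\mathcal R_i=\beta_i/(\gamma_i+\mu)$. Then there exists $\mu^*\in(0,\min\{\gamma_1,\gamma_2\})$ such that for all $0<\mu<\mu^*$: (i) If $(\mathcal R_1,\mathcal R_2)\in\Omega^\mu$, then system (M) has a unique feasible steady state with $I_1^*>0$ and $I_2^*>0$, and it satisfies $S^*=s_0+\mathcal O(\mu)$ and $I_i^*=\mu b_i+\mathcal O(\mu^2)$ for $i=1,2$ as $\mu\to0^+$, where $s_0$ is the positive root of $p_s(s)=as^2+bs+c$ and $$b_1=\frac{s_0+\sigma_{12}(1-s_0)}{\gamma_1\sigma_{12}}(1-\mathcal R_2s_0),\qquad b_2=\frac{s_0+\sigma_{21}(1-s_0)}{\gamma_2\sigma_{21}}(1-\mathcal R_1s_0).$$ (ii) If $(\mathcal R_1,\mathcal R_2)\notin\Omega^\mu$, then system (M) has no steady state with $I_1^*>0$ and $I_2^*>0$ that is feasible.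
   Context: System (M) is the two-strain epidemic model for $(S,I_1,I_2,J_1,J_2,R_1,R_2,R_3)$ (the letters $R_1,R_2,R_3$ denote compartments, while $\mathcal R_1,\mathcal R_2$ denote numbers): $S'=\mu-\beta_1(I_1+J_1)S-\beta_2(I_2+J_2)S-\mu S$, $I_1'=\beta_1S(I_1+J_1)-(\mu+\gamma_1)I_1$, $I_2'=\beta_2S(I_2+J_2)-(\mu+\gamma_2)I_2$, $J_1'=\beta_1\sigma_{21}R_2(I_1+J_1)-(\mu+\gamma_1)J_1$, $J_2'=\beta_2\sigma_{12}R_1(I_2+J_2)-(\mu+\gamma_2)J_2$, $R_1'=\gamma_1I_1-\beta_2\sigma_{12}(I_2+J_2)R_1-\mu R_1$, $R_2'=\gamma_2I_2-\beta_1\sigma_{21}(I_1+J_1)R_2-\mu R_2$, $R_3'=\gamma_1J_1+\gamma_2J_2-\mu R_3$. A steady state is a zero of the right-hand side; it is feasible if all components are nonnegative and sum to 1. For $\mu\ge 0$, $\Omega^\mu=\Omega^\mu_1\cap\Omega^\mu_2$ where, for $\{i,j\}=\{1,2\}$, $\Omega^\mu_i=\left\{(\mathcal R_1,\mathcal R_2):\ \mathcal R_i>1,\ \mathcal R_j>\dfrac{(\gamma_i+\mu)\mathcal R_i}{(1+\sigma_{ij}(\mathcal R_i-1))\gamma_i+\mu}\right\}$. The quadratic $p_s(s)=as^2+bs+c$ has coefficients $a=\sigma_{12}(1-\sigma_{21})\mathcal R_1+\sigma_{21}(1-\sigma_{12})\mathcal R_2$, $b=\sigma_{12}\sigma_{21}(\mathcal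 R_1+\mathcal R_2)-(\sigma_{12}+\sigma_{21}-\sigma_{12}\sigma_{21})$, $c=-\sigma_{12}\sigma_{21}$; when $a>0$ it has exactly one positive root since $c<0$ (when $a=0$, i.e. $\sigma_{12}=\sigma_{21}=1$, $s_0=1/(\mathcal R_1+\mathcal R_2-1)$). *)

(* Defs.v *)
From Stdlib Require Import Reals.
Open Scope R_scope.

Record state : Type := mkState {
  sS : R; sI1 : R; sI2 : R; sJ1 : R; sJ2 : R; sR1 : R; sR2 : R; sR3 : R }.

Definition steady_state (beta1 beta2 gamma1 gamma2 sigma12 sigma21 mu : R)
    (x : state) : Prop :=
  let S := sS x in let I1 := sI1 x in let I2 := sI2 x in
  let J1 := sJ1 x in let J2 := sJ2 x in
  let R1 := sR1 x in let R2 := sR2 x in let R3 := sR3 x in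
  mu - beta1 * (I1 + J1) * S - beta2 * (I2 + J2) * S - mu * S = 0 /\
  beta1 * S * (I1 + J1) - (mu + gamma1) * I1 = 0 /\
  beta2 * S * (I2 + J2) - (mu + gamma2) * I2 = 0 /\
  beta1 * sigma21 * R2 * (I1 + J1) - (mu + gamma1) * J1 = 0 /\
  beta2 * sigma12 * R1 * (I2 + J2) - (mu + gamma2) * J2 = 0 /\
  gamma1 * I1 - beta2 * sigma12 * (I2 + J2) * R1 - mu * R1 = 0 /\
  gamma2 * I2 - beta1 * sigma21 * (I1 + J1) * R2 - mu * R2 = 0 /\
  gamma1 * J1 + gamma2 * J2 - mu * R3 = 0.

Definition feasible (x : state) : Prop :=
  0 <= sS x /\ 0 <= sI1 x /\ 0 <= sI2 x /\ 0 <= sJ1 x /\ 0 <= sJ2 x /\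
  0 <= sR1 x /\ 0 <= sR2 x /\ 0 <= sR3 x /\
  sS x + sI1 x + sI2 x + sJ1 x + sJ2 x + sR1 x + sR2 x + sR3 x = 1.

Definition repr_num (beta gamma mu : R) : R := beta / (gamma + mu).

Definition Omega_i (gammai sigmaij mu Ri Rj : R) : Prop :=
  Ri > 1 /\ Rj > (gammai + mu) * Ri / ((1 + sigmaij * (Ri - 1)) * gammai + mu).

Definition Omega (gamma1 gamma2 sigma12 sigma21 mu Rn1 Rn2 : R) : Prop :=
  Omega_i gamma1 sigma12 mu Rn1 Rn2 /\ Omega_i gamma2 sigma21 mu Rn2 Rn1.

Definition ps (sigma12 sigma21 Rn1 Rn2 s : R) : R :=
  let a := sigma12 * (1 - sigma21) * Rn1 + sigma21 * (1 - sigma12) * Rn2 in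
  let b := sigma12 * sigma21 * (Rn1 + Rn2)
           - (sigma12 + sigma21 - sigma12 * sigma21) in
  let c := - (sigma12 * sigma21) in
  a * s ^ 2 + b * s + c.

Definition coef_b1 (gamma1 sigma12 Rn2 s0 : R) : R :=
  (s0 + sigma12 * (1 - s0)) / (gamma1 * sigma12) * (1 - Rn2 * s0).

Definition coef_b2 (gamma2 sigma21 Rn1 s0 : R) : R :=
  (s0 + sigma21 * (1 - s0)) / (gamma2 * sigma21) * (1 - Rn1 * s0).

(* Main.v *)
Require Import Defs.
From Stdlib Require Import Reals Lra Lia Psatz.
Open Scope R_scope.

Record prm := Prm { pa1 : R; pa2 : R; pG1 : R; pG2 : R; ps12 : R; ps21 : R }.

Definition Dl (p : prm) (S : R) : R :=
  let (a1,a2,G1,G2,s12,s21) := p in G1*G2*(S*S) - (a1-S)*(a2-S).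
Definition Nn (p : prm) (S : R) : R :=
  let (a1,a2,G1,G2,s12,s21) := p in
  S*(G2*(a2-S)/s12 + G1*(a1-S)/s21) + (1/s12+1/s21)*(a1-S)*(a2-S).
Definition Fc p S := S*(Dl p S + Nn p S) - Dl p S.
Definition cf3 (p : prm) := let (a1,a2,G1,G2,s12,s21) := p in
  G1*G2 - 1 + (1-G2)/s12 + (1-G1)/s21.
Definition cf2 (p : prm) := let (a1,a2,G1,G2,s12,s21) := p in
  a1*(1+G1/s21-(1/s12+1/s21)) + a2*(1+G2/s12-(1/s12+1/s21)) - (G1*G2-1).
Definition cf1 (p : prm) := let (a1,a2,G1,G2,s12,s21) := p in
  (1/s12+1/s21-1)*a1*a2 - (a1+a2).
Definition cf0 (p : prm) := let (a1,a2,G1,G2,s12,s21) := p in a1*a2.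
Definition dF p S := 3*cf3 p*S^2 + 2*cf2 p*S + cf1 p.
Definition uf (p : prm) S := let (a1,a2,G1,G2,s12,s21) := p in
  (a2-S)*(G2*S*s21+s12*(a1-S))/(s12*s21*Dl p S).
Definition vf (p : prm) S := let (a1,a2,G1,G2,s12,s21) := p in
  (a1-S)*(G1*S*s12+s21*(a2-S))/(s12*s21*Dl p S).

Lemma Fc_poly p S : ps12 p <> 0 -> ps21 p <> 0 ->
  Fc p S = cf3 p*S^3 + cf2 p*S^2 + cf1 p*S + cf0 p.
Proof. destruct p as [a1 a2 G1 G2 s12 s21]; simpl; intros; unfold Fc, Dl, Nn. field; auto. Qed.

Lemma Fc_DG p S : ps12 p <> 0 -> ps21 p <> 0 -> Dl p S <> 0 ->
  Fc p S = Dl p S * (S*(1 + uf p S + vf p S) - 1).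
Proof. destruct p as [a1 a2 G1 G2 s12 s21]; simpl; intros H1 H2 H3; unfold Fc, Nn.
  unfold Dl in *. field; repeat split; auto. Qed.

Lemma dF_id p S : ps12 p <> 0 -> ps21 p <> 0 -> Dl p S <> 0 ->
  let a1 := pa1 p in let a2 := pa2 p in let G1 := pG1 p in let G2 := pG2 p in
  let s12 := ps12 p in let s21 := ps21 p in
  let u := uf p S in let v := vf p S in
  let R1 := (a2-S)/s12 in let R2 := (a1-S)/s21 in
  dF p S = (2*G1*G2*S+(a1-S)+(a2-S))*(S*(1+u+v)-1) + Dl p S*(1+u+v)
   - S*(G2*S*(G1*u+v+1/s12)+s12*R1*(G2*v+u+1/s21)+G1*S*(G2*v+u+1/s21)+s21*R2*(G1*u+v+1/s12)).
Proof. destruct p as [a1 a2 G1 G2 s12 s21]; simpl; intros H1 H2 H3. unfold dF, uf, vf; simpl.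
  unfold Dl in *. field; repeat split; auto. Qed.

Definition goodp (p : prm) := 0 < pG1 p <= 1 /\ 0 < pG2 p <= 1 /\ 0 < ps12 p <= 1 /\ 0 < ps21 p <= 1.

Lemma div_nonneg x y : 0 <= x -> 0 < y -> 0 <= x / y.
Proof. intros; unfold Rdiv; apply Rmult_le_pos; [lra | left; apply Rinv_0_lt_compat; lra]. Qed.

Lemma uv_nonneg p S : goodp p -> 0 < S -> S <= pa1 p -> S <= pa2 p -> 0 < Dl p S ->
  0 <= uf p S /\ 0 <= vf p S.
Proof.
  destruct p as [a1 a2 G1 G2 s12 s21]; unfold goodp; simpl; intros (HG1&HG2&Hs1&Hs2) HS H1 H2 HD.
  assert (0 < s12*s21) by nra.
  split; unfold uf, vf; apply div_nonneg;
  try (apply Rmult_lt_0_compat; [nra| exact HD]);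
  apply Rmult_le_pos; try lra; apply Rplus_le_le_0_compat; apply Rmult_le_pos; nra.
Qed.

Lemma L1 p S : goodp p -> 0 < S -> S <= pa1 p -> S <= pa2 p -> 0 < Dl p S ->
  Fc p S = 0 -> dF p S < 0.
Proof.
  intros Hg HS H1 H2 HD HF.
  destruct (uv_nonneg p S Hg HS H1 H2 HD) as [Hu Hv].
  destruct Hg as (HG1&HG2&Hs1&Hs2).
  assert (Hs1' : ps12 p <> 0) by lra. assert (Hs2' : ps21 p <> 0) by lra.
  assert (HD' : Dl p S <> 0) by lra.
  pose proof (dF_id p S Hs1' Hs2' HD') as Hid.
  rewrite (Fc_DG p S Hs1' Hs2' HD') in HF.
  assert (HW : S * (1 + uf p S + vf p S) = 1).
  { apply Rmult_integral in HF; destruct HF as [HF|HF]; lra. }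
  simpl in Hid. revert Hid HW Hu Hv HD H1 H2 HG1 HG2 Hs1 Hs2 Hs1' Hs2' HD'.
  generalize (uf p S) (vf p S). intros u v.
  destruct p as [a1 a2 G1 G2 s12 s21]; simpl. intros Hid HW Hu Hv HD H1 H2 HG1 HG2 Hs1 Hs2 Hs1' Hs2' HD'.
  unfold Dl in *.
  rewrite Hid. clear Hid.
  set (R1 := (a2 - S)/s12). set (R2 := (a1-S)/s21).
  assert (HR1 : s12 * R1 = a2 - S) by (unfold R1; field; auto).
  assert (HR2 : s21 * R2 = a1 - S) by (unfold R2; field; auto).
  assert (Hi1 : 1 <= 1/s12).
  { apply (Rmult_le_reg_l s12); [lra|]. replace (s12*(1/s12)) with 1 by (field; auto). nra. }
  assert (Hi2 : 1 <= 1/s21).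
  { apply (Rmult_le_reg_l s21); [lra|]. replace (s21*(1/s21)) with 1 by (field; auto). nra. }
  assert (HP1 : 0 <= s12*R1*(G2*v+u+1/s21)).
  { rewrite HR1. apply Rmult_le_pos; [lra|]. nra. }
  assert (HP2 : 0 <= s21*R2*(G1*u+v+1/s12)).
  { rewrite HR2. apply Rmult_le_pos; [lra|]. nra. }
  set (P := G2*S*(G1*u+v+1/s12)+s12*R1*(G2*v+u+1/s21)+G1*S*(G2*v+u+1/s21)+s21*R2*(G1*u+v+1/s12)).
  assert (HP : G1*G2*S*(u+v+2) <= P).
  { unfold P. assert (0 <= G1*G2) by nra.
    assert (HGS : 0 <= G2*S) by nra. assert (HGS1 : 0 <= G1*S) by nra.
    assert (0 <= G2*S*v) by (apply Rmult_le_pos; lra).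
    assert (G1*G2*S*v <= G2*S*v) by nra.
    assert (G1*G2*S <= G2*S*(1/s12)) by nra.
    assert (G1*G2*S <= G1*S*(1/s21)) by nra.
    assert (0 <= G1*S*u) by (apply Rmult_le_pos; lra).
    assert (0 <= G1*S*(G2*v)) by (apply Rmult_le_pos; nra).
    nra. }
  assert (HP' : G1*G2*S*S*(1+S) <= S*S*P).
  { assert (G1*G2*S*S*(1+S) = S*(S*(G1*G2*S*(u+v+2)))).
    { transitivity (G1*G2*S*S*(S*(1+u+v)+S)); [rewrite HW; ring | ring]. }
    rewrite H. assert (0 <= S) by lra.
    replace (S*S*P) with (S*(S*P)) by ring. apply Rmult_le_compat_l; auto.
    apply Rmult_le_compat_l; auto. }
  assert (HS2 : 0 < G1*G2*S*S*S) by (repeat apply Rmult_lt_0_compat; lra).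
  apply (Rmult_lt_reg_l S); [lra|]. rewrite Rmult_0_r.
  replace (S * ((2 * G1 * G2 * S + (a1 - S) + (a2 - S)) * (S * (1 + u + v) - 1) +
     (G1 * G2 * (S * S) - (a1 - S) * (a2 - S)) * (1 + u + v) - S * P))
   with ((2 * G1 * G2 * S + (a1 - S) + (a2 - S)) * S * (S * (1 + u + v) - 1) +
     (G1 * G2 * (S * S) - (a1 - S) * (a2 - S)) * (S*(1 + u + v)) - S * S * P) by ring.
  rewrite HW. assert (0 <= (a1-S)*(a2-S)) by nra. nra.
Qed.

Definition poly3 (p : prm) (S : R) := cf3 p*S^3 + cf2 p*S^2 + cf1 p*S + cf0 p.

Lemma two_roots p r r' : 0 < cf3 p -> r < r' -> poly3 p r = 0 -> poly3 p r' = 0 ->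
  dF p r < 0 -> dF p r' < 0 -> False.
Proof.
  unfold poly3, dF. generalize (cf3 p) (cf2 p) (cf1 p) (cf0 p). intros a b c d Ha Hr H1 H2 D1 D2.
  assert (Hq : a*(r'^2+r'*r+r^2) + b*(r'+r) + c = 0).
  { apply (Rmult_eq_reg_l (r'-r)); [|lra]. rewrite Rmult_0_r.
    replace ((r'-r)*(a*(r'^2+r'*r+r^2) + b*(r'+r) + c)) with
      ((a*r'^3+b*r'^2+c*r'+d) - (a*r^3+b*r^2+c*r+d)) by ring. lra. }
  assert (E1 : 3*a*r^2+2*b*r+c = (r-r')*(a*(2*r+r')+b)).
  { transitivity (3*a*r^2+2*b*r+c - (a*(r'^2+r'*r+r^2) + b*(r'+r) + c)); [lra|ring]. }
  assert (E2 : 3*a*r'^2+2*b*r'+c = (r'-r)*(a*(2*r'+r)+b)).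
  { transitivity (3*a*r'^2+2*b*r'+c - (a*(r'^2+r'*r+r^2) + b*(r'+r) + c)); [lra|ring]. }
  assert (P1 : 0 < a*(2*r+r')+b).
  { destruct (Rle_lt_dec (a*(2*r+r')+b) 0) as [h|h]; auto.
    exfalso. assert (0 <= (r-r')*(a*(2*r+r')+b)) by nra. lra. }
  assert (P2 : 0 < a*(2*r'+r)+b) by nra.
  assert (0 < (r'-r)*(a*(2*r'+r)+b)) by (apply Rmult_lt_0_compat; lra). lra.
Qed.

Lemma Fc_poly3 p S : goodp p -> Fc p S = poly3 p S.
Proof. intros (_&_&H1&H2). apply Fc_poly; lra. Qed.

Lemma c3_pos p : goodp p -> pG1 p < 1 -> pG2 p < 1 -> 0 < cf3 p.
Proof.
  destruct p as [a1 a2 G1 G2 s12 s21]; unfold goodp; simpl; intros (HG1&HG2&Hs1&Hs2) h1 h2.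
  assert (1 - G2 <= (1-G2)/s12).
  { apply (Rmult_le_reg_l s12); [lra|]. replace (s12*((1-G2)/s12)) with (1-G2) by (field; lra). nra. }
  assert (1 - G1 <= (1-G1)/s21).
  { apply (Rmult_le_reg_l s21); [lra|]. replace (s21*((1-G1)/s21)) with (1-G1) by (field; lra). nra. }
  nra.
Qed.

Lemma Dl_mono p r r' : goodp p -> 0 <= r -> r <= r' -> r' <= pa1 p -> r' <= pa2 p ->
  Dl p r <= Dl p r'.
Proof.
  destruct p as [a1 a2 G1 G2 s12 s21]; unfold goodp; simpl; intros (HG1&HG2&Hs1&Hs2) h0 h1 h2 h3.
  replace (G1 * G2 * (r' * r') - (a1 - r') * (a2 - r') - (G1 * G2 * (r * r) - (a1 - r) * (a2 - r)))
    with ((r'-r)*((G1*G2-1)*(r+r') + a1 + a2)) by ring.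
  assert (0 <= G1*G2 <= 1) by nra.
  assert (0 <= (r'-r)*((G1*G2-1)*(r+r') + a1 + a2)) by (apply Rmult_le_pos; nra).
  lra.
Qed.

Lemma Nn_pos p S : goodp p -> 0 < S -> S < pa1 p -> S < pa2 p -> 0 < Nn p S.
Proof.
  destruct p as [a1 a2 G1 G2 s12 s21]; unfold goodp; simpl; intros (HG1&HG2&Hs1&Hs2) h0 h1 h2.
  assert (0 < 1/s12) by (apply Rdiv_lt_0_compat; lra).
  assert (0 < 1/s21) by (apply Rdiv_lt_0_compat; lra).
  assert (0 <= G2*(a2-S)/s12) by (apply div_nonneg; nra).
  assert (0 <= G1*(a1-S)/s21) by (apply div_nonneg; nra).
  assert (0 < (1/s12+1/s21)*(a1-S)*(a2-S)) by (repeat apply Rmult_lt_0_compat; lra).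
  nra.
Qed.

Lemma poly3_cont p : continuity (poly3 p).
Proof. unfold poly3. reg. Qed.

Lemma exist_root p m : goodp p -> 0 < pa1 p < 1 -> 0 < pa2 p < 1 -> 0 < m ->
  m <= pa1 p -> m <= pa2 p -> Fc p m < 0 ->
  exists r, 0 < r < m /\ Fc p r = 0 /\ 0 < Dl p r.
Proof.
  intros Hg Ha1 Ha2 Hm H1 H2 HF.
  rewrite (Fc_poly3 p m Hg) in HF.
  destruct (IVT (fun S => - poly3 p S) 0 m) as [z [Hz Hz0]].
  - apply continuity_opp, poly3_cont.
  - lra.
  - unfold poly3. destruct p; simpl in *. nra.
  - lra.
  - assert (Hpz : poly3 p z = 0) by lra.
    assert (z <> 0). { intro; subst. unfold poly3 in Hpz. destruct p; simpl in *. nra. }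
    assert (z <> m). { intro; subst. lra. }
    exists z. split; [lra|]. split; [rewrite (Fc_poly3 p z Hg); auto|].
    destruct (Rlt_le_dec 0 (Dl p z)) as [h|h]; auto. exfalso.
    assert (HN := Nn_pos p z Hg ltac:(lra) ltac:(lra) ltac:(lra)).
    rewrite <- (Fc_poly3 p z Hg) in Hpz. unfold Fc in Hpz.
    assert (0 <= (z-1)*Dl p z) by nra. nra.
Qed.

Lemma uniq_root p r r' : goodp p -> pG1 p < 1 -> pG2 p < 1 ->
  0 < r -> r <= pa1 p -> r <= pa2 p -> 0 < Dl p r -> Fc p r = 0 ->
  0 < r' -> r' <= pa1 p -> r' <= pa2 p -> 0 < Dl p r' -> Fc p r' = 0 -> r = r'.
Proof.
  intros Hg h1 h2 Hr H1 H2 HD HF Hr' H1' H2' HD' HF'.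
  pose proof (L1 p r Hg Hr H1 H2 HD HF). pose proof (L1 p r' Hg Hr' H1' H2' HD' HF').
  pose proof (c3_pos p Hg h1 h2).
  rewrite (Fc_poly3 p _ Hg) in HF. rewrite (Fc_poly3 p _ Hg) in HF'.
  destruct (Rtotal_order r r') as [h|[h|h]]; auto; exfalso.
  - eapply two_roots with (r:=r) (r':=r'); eauto.
  - eapply two_roots with (r:=r') (r':=r); eauto.
Qed.

Lemma no_root p m r : goodp p -> pG1 p < 1 -> pG2 p < 1 ->
  m <= pa1 p -> m <= pa2 p -> 0 <= Fc p m ->
  0 < r -> r < m -> Fc p r = 0 -> 0 < Dl p r -> False.
Proof.
  intros Hg h1 h2 H1 H2 HFm Hr Hrm HF HD.
  pose proof (L1 p r Hg Hr ltac:(lra) ltac:(lra) HD HF) as Hdr.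
  pose proof (c3_pos p Hg h1 h2) as Hc.
  rewrite (Fc_poly3 p _ Hg) in HF. rewrite (Fc_poly3 p _ Hg) in HFm.
  set (Q := fun S => cf3 p*S^2 + (cf3 p*r + cf2 p)*S + (cf3 p*r^2 + cf2 p*r + cf1 p)).
  assert (HQ : forall S, poly3 p S = (S - r) * Q S).
  { intro S. unfold Q. unfold poly3 in *.
    transitivity (poly3 p S - poly3 p r); [unfold poly3; lra| unfold poly3; ring]. }
  assert (HQr : Q r = dF p r) by (unfold Q, dF; ring).
  assert (HQm : 0 <= Q m).
  { rewrite HQ in HFm. destruct (Rle_lt_dec 0 (Q m)) as [h|h]; auto.
    assert (0 < (m-r)*(- Q m)) by (apply Rmult_lt_0_compat; lra). lra. }
  assert (Hex : exists z, r < z <= m /\ Q z = 0).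
  { destruct HQm as [HQm|HQm].
    - destruct (IVT Q r m) as [z [Hz Hz0]].
      + unfold Q; reg.
      + lra.
      + lra.
      + lra.
      + exists z. split; auto. split; [|lra]. destruct Hz as [Hz _].
        destruct Hz as [Hz|Hz]; auto. subst. lra.
    - exists m. split; [lra|auto]. }
  destruct Hex as [z [Hz HQz]].
  assert (HFz : poly3 p z = 0) by (rewrite HQ, HQz; ring).
  assert (HDz : 0 < Dl p z).
  { pose proof (Dl_mono p r z Hg ltac:(lra) ltac:(lra) ltac:(lra) ltac:(lra)). lra. }
  assert (Hdz : dF p z < 0).
  { apply L1; auto; try lra. rewrite (Fc_poly3 p _ Hg). auto. }
  eapply two_roots with (r:=r) (r':=z); eauto. lra.
Qed.

Definition mkp (b1 b2 g1 g2 s12 s21 mu : R) : prm :=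
  Prm ((g1+mu)/b1) ((g2+mu)/b2) (g1/(mu+g1)) (g2/(mu+g2)) s12 s21.

Definition build (b1 b2 g1 g2 s12 s21 mu S : R) : state :=
  let p := mkp b1 b2 g1 g2 s12 s21 mu in
  let u := uf p S in let v := vf p S in
  let R1 := (pa2 p - S)/s12 in let R2 := (pa1 p - S)/s21 in
  let J1 := s21*mu*u*R2/(mu+g1) in let J2 := s12*mu*v*R1/(mu+g2) in
  mkState S (mu*u*S/(mu+g1)) (mu*v*S/(mu+g2)) J1 J2 R1 R2 ((g1*J1+g2*J2)/mu).

Lemma steady_sum b1 b2 g1 g2 s12 s21 mu x : 0 < mu ->
  steady_state b1 b2 g1 g2 s12 s21 mu x ->
  sS x + sI1 x + sI2 x + sJ1 x + sJ2 x + sR1 x + sR2 x + sR3 x = 1.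
Proof.
  destruct x as [S I1 I2 J1 J2 R1 R2 R3]; unfold steady_state; simpl.
  intros Hmu (e1&e2&e3&e4&e5&e6&e7&e8).
  assert (mu * (S+I1+I2+J1+J2+R1+R2+R3) = mu * 1) by lra.
  apply Rmult_eq_reg_l in H; lra.
Qed.

Lemma goodp_mkp b1 b2 g1 g2 s12 s21 mu : 0 < g1 -> 0 < g2 -> 0 < mu ->
  0 < s21 <= 1 -> 0 < s12 <= 1 ->
  goodp (mkp b1 b2 g1 g2 s12 s21 mu) /\ pG1 (mkp b1 b2 g1 g2 s12 s21 mu) < 1 /\
  pG2 (mkp b1 b2 g1 g2 s12 s21 mu) < 1.
Proof.
  intros. unfold goodp, mkp; simpl.
  assert (0 < g1/(mu+g1)) by (apply Rdiv_lt_0_compat; lra).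
  assert (0 < g2/(mu+g2)) by (apply Rdiv_lt_0_compat; lra).
  assert (g1/(mu+g1) < 1) by (apply (Rmult_lt_reg_l (mu+g1)); [lra|]; field_simplify; lra).
  assert (g2/(mu+g2) < 1) by (apply (Rmult_lt_reg_l (mu+g2)); [lra|]; field_simplify; lra).
  repeat split; lra.
Qed.

Lemma uf_eq p S : uf p S = (pa2 p - S)*(pG2 p*S*ps21 p + ps12 p*(pa1 p - S))/(ps12 p*ps21 p*Dl p S).
Proof. destruct p; reflexivity. Qed.
Lemma vf_eq p S : vf p S = (pa1 p - S)*(pG1 p*S*ps12 p + ps21 p*(pa2 p - S))/(ps12 p*ps21 p*Dl p S).
Proof. destruct p; reflexivity. Qed.

Lemma uv_sys p S : ps12 p <> 0 -> ps21 p <> 0 -> Dl p S <> 0 ->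
  pG1 p * uf p S * S = (pa2 p - S)/ps12 p * (ps12 p * vf p S + 1) /\
  pG2 p * vf p S * S = (pa1 p - S)/ps21 p * (ps21 p * uf p S + 1).
Proof.
  destruct p as [a1 a2 G1 G2 s12 s21]; simpl; intros H1 H2 H3. unfold uf, vf, Dl in *.
  split; field; repeat split; auto.
Qed.

Lemma build_ok b1 b2 g1 g2 s12 s21 mu S :
  0 < b1 -> 0 < b2 -> 0 < g1 -> 0 < g2 -> 0 < mu -> 0 < s21 <= 1 -> 0 < s12 <= 1 ->
  let p := mkp b1 b2 g1 g2 s12 s21 mu in
  0 < S -> S < pa1 p -> S < pa2 p -> 0 < Dl p S -> Fc p S = 0 ->
  let x := build b1 b2 g1 g2 s12 s21 mu S in
  steady_state b1 b2 g1 g2 s12 s21 mu x /\ feasible x /\ 0 < sI1 x /\ 0 < sI2 x.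
Proof.
  intros Hb1 Hb2 Hg1 Hg2 Hmu Hs21 Hs12 p HS Ha1 Ha2 HD HF x.
  destruct (goodp_mkp b1 b2 g1 g2 s12 s21 mu Hg1 Hg2 Hmu Hs21 Hs12) as [Hg _].
  fold p in Hg.
  assert (Hs1' : ps12 p <> 0) by (unfold p; simpl; lra).
  assert (Hs2' : ps21 p <> 0) by (unfold p; simpl; lra).
  assert (HD' : Dl p S <> 0) by lra.
  destruct (uv_sys p S Hs1' Hs2' HD') as [K1 K2].
  pose proof (Fc_DG p S Hs1' Hs2' HD') as HFD. rewrite HF in HFD.
  assert (HW : S * (1 + uf p S + vf p S) = 1).
  { symmetry in HFD. apply Rmult_integral in HFD; destruct HFD as [h|h]; lra. }
  assert (Hu : 0 < uf p S /\ 0 < vf p S).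
  { clear K1 K2 HFD HW HF. unfold p, mkp in *; simpl in *. unfold goodp in Hg; simpl in Hg.
    destruct Hg as (G1&G2&_&_).
    unfold uf, vf; simpl.
    split; apply Rdiv_lt_0_compat; try (apply Rmult_lt_0_compat; [nra|exact HD]);
    apply Rmult_lt_0_compat; try lra; apply Rplus_lt_le_0_compat; try (apply Rmult_lt_0_compat; nra);
    apply Rmult_le_pos; nra. }
  destruct Hu as [Hu Hv].
  revert K1 K2 HW Hu Hv Ha1 Ha2. unfold x, build. fold p.
  generalize (uf p S) (vf p S). intros u v K1 K2 HW Hu Hv Ha1 Ha2.
  unfold p, mkp in *; simpl in *.
  set (a1 := (g1+mu)/b1) in *. set (a2 := (g2+mu)/b2) in *.
  assert (Ea1 : b1 * a1 = g1 + mu) by (unfold a1; field; lra).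
  assert (Ea2 : b2 * a2 = g2 + mu) by (unfold a2; field; lra).
  set (R1 := (a2 - S)/s12). set (R2 := (a1 - S)/s21).
  assert (HR1 : s12 * R1 = a2 - S) by (unfold R1; field; lra).
  assert (HR2 : s21 * R2 = a1 - S) by (unfold R2; field; lra).
  assert (HR1p : 0 < R1) by (unfold R1; apply Rdiv_lt_0_compat; lra).
  assert (HR2p : 0 < R2) by (unfold R2; apply Rdiv_lt_0_compat; lra).
  set (I1 := mu*u*S/(mu+g1)). set (I2 := mu*v*S/(mu+g2)).
  set (J1 := s21*mu*u*R2/(mu+g1)). set (J2 := s12*mu*v*R1/(mu+g2)).
  assert (X1 : b1 * (I1 + J1) = mu * u).
  { unfold I1, J1. replace (mu*u*S/(mu+g1) + s21*mu*u*R2/(mu+g1)) with (mu*u*(S + s21*R2)/(mu+g1))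
      by (field; lra). rewrite HR2. replace (S + (a1-S)) with a1 by ring.
    replace (b1 * (mu * u * a1 / (mu + g1))) with (mu*u*(b1*a1)/(mu+g1)) by (field; lra).
    rewrite Ea1. field; lra. }
  assert (X2 : b2 * (I2 + J2) = mu * v).
  { unfold I2, J2. replace (mu*v*S/(mu+g2) + s12*mu*v*R1/(mu+g2)) with (mu*v*(S + s12*R1)/(mu+g2))
      by (field; lra). rewrite HR1. replace (S + (a2-S)) with a2 by ring.
    replace (b2 * (mu * v * a2 / (mu + g2))) with (mu*v*(b2*a2)/(mu+g2)) by (field; lra).
    rewrite Ea2. field; lra. }
  assert (Hst : steady_state b1 b2 g1 g2 s12 s21 mu
     (mkState S I1 I2 J1 J2 R1 R2 ((g1*J1+g2*J2)/mu))).
  { unfold steady_state; simpl.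
    split; [|split; [|split; [|split; [|split; [|split; [|split]]]]]].
    - replace (b1 * (I1 + J1) * S) with ((b1*(I1+J1))*S) by ring.
      replace (b2 * (I2 + J2) * S) with ((b2*(I2+J2))*S) by ring.
      rewrite X1, X2. replace (mu - mu*u*S - mu*v*S - mu*S) with (mu*(1 - S*(1+u+v))) by ring.
      rewrite HW; ring.
    - replace (b1 * S * (I1 + J1)) with ((b1*(I1+J1))*S) by ring. rewrite X1.
      unfold I1; field; lra.
    - replace (b2 * S * (I2 + J2)) with ((b2*(I2+J2))*S) by ring. rewrite X2.
      unfold I2; field; lra.
    - replace (b1 * s21 * R2 * (I1 + J1)) with ((b1*(I1+J1))*(s21*R2)) by ring. rewrite X1.
      unfold J1; field; lra.
    - replace (b2 * s12 * R1 * (I2 + J2)) with ((b2*(I2+J2))*(s12*R1)) by ring. rewrite X2.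
      unfold J2; field; lra.
    - replace (b2 * s12 * (I2 + J2) * R1) with ((b2*(I2+J2))*(s12*R1)) by ring. rewrite X2.
      unfold I1. replace (g1 * (mu * u * S / (mu + g1))) with (mu * (g1/(mu+g1)*u*S)) by (field; lra).
      rewrite K1. fold R1. ring.
    - replace (b1 * s21 * (I1 + J1) * R2) with ((b1*(I1+J1))*(s21*R2)) by ring. rewrite X1.
      unfold I2. replace (g2 * (mu * v * S / (mu + g2))) with (mu * (g2/(mu+g2)*v*S)) by (field; lra).
      rewrite K2. fold R2. ring.
    - field; lra. }
  split; [exact Hst|].
  assert (HI1 : 0 < I1) by (unfold I1; apply Rdiv_lt_0_compat; [repeat apply Rmult_lt_0_compat|]; lra).
  assert (HI2 : 0 < I2) by (unfold I2; apply Rdiv_lt_0_compat; [repeat apply Rmult_lt_0_compat|]; lra).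
  assert (HJ1 : 0 < J1).
  { unfold J1. apply Rdiv_lt_0_compat; [|lra]. apply Rmult_lt_0_compat; [|lra]. apply Rmult_lt_0_compat; [|lra]. apply Rmult_lt_0_compat; lra. }
  assert (HJ2 : 0 < J2).
  { unfold J2. apply Rdiv_lt_0_compat; [|lra]. apply Rmult_lt_0_compat; [|lra]. apply Rmult_lt_0_compat; [|lra]. apply Rmult_lt_0_compat; lra. }
  assert (HR3 : 0 < (g1*J1+g2*J2)/mu) by (apply Rdiv_lt_0_compat; nra).
  pose proof (steady_sum _ _ _ _ _ _ _ _ Hmu Hst) as Hsum. simpl in Hsum.
  unfold feasible; simpl. repeat split; lra.
Qed.

Lemma steady_inv b1 b2 g1 g2 s12 s21 mu y :
  0 < b1 -> 0 < b2 -> 0 < g1 -> 0 < g2 -> 0 < mu -> 0 < s21 <= 1 -> 0 < s12 <= 1 ->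
  steady_state b1 b2 g1 g2 s12 s21 mu y -> feasible y -> 0 < sI1 y -> 0 < sI2 y ->
  let p := mkp b1 b2 g1 g2 s12 s21 mu in
  0 < sS y /\ sS y < pa1 p /\ sS y < pa2 p /\ 0 < Dl p (sS y) /\ Fc p (sS y) = 0 /\
  y = build b1 b2 g1 g2 s12 s21 mu (sS y).
Proof.
  intros Hb1 Hb2 Hg1 Hg2 Hmu Hs21 Hs12 Hst Hfe HI1 HI2 p.
  destruct (goodp_mkp b1 b2 g1 g2 s12 s21 mu Hg1 Hg2 Hmu Hs21 Hs12) as [Hg _].
  fold p in Hg.
  assert (Hs1' : ps12 p <> 0) by (unfold p; simpl; lra).
  assert (Hs2' : ps21 p <> 0) by (unfold p; simpl; lra).
  destruct y as [S I1 I2 J1 J2 R1 R2 R3].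
  unfold steady_state, feasible in *; simpl in *.
  destruct Hst as (e1&e2&e3&e4&e5&e6&e7&e8).
  destruct Hfe as (hS&hI1&hI2&hJ1&hJ2&hR1&hR2&hR3&_).
  set (x := I1 + J1) in *. set (w := I2 + J2) in *.
  assert (Hx : 0 < x) by (unfold x; lra). assert (Hw : 0 < w) by (unfold w; lra).
  assert (Ea1 : S + s21 * R2 = (g1+mu)/b1).
  { apply (Rmult_eq_reg_l (b1 * x)); [|nra].
    replace (b1 * x * ((g1+mu)/b1)) with ((mu+g1)*(I1+J1)) by (unfold x; field; lra). nra. }
  assert (Ea2 : S + s12 * R1 = (g2+mu)/b2).
  { apply (Rmult_eq_reg_l (b2 * w)); [|nra].
    replace (b2 * w * ((g2+mu)/b2)) with ((mu+g2)*(I2+J2)) by (unfold w; field; lra). nra. }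
  assert (HR1p : 0 < R1).
  { assert (0 < g1 * I1) by nra. assert (0 < b2*s12*w + mu) by nra. nra. }
  assert (HR2p : 0 < R2).
  { assert (0 < g2 * I2) by nra. assert (0 < b1*s21*x + mu) by nra. nra. }
  assert (HSp : 0 < S).
  { destruct hS as [h|h]; auto. subst. lra. }
  set (u := b1 * x / mu). set (v := b2 * w / mu).
  assert (Hu : 0 < u) by (unfold u; apply Rdiv_lt_0_compat; nra).
  assert (Hv : 0 < v) by (unfold v; apply Rdiv_lt_0_compat; nra).
  set (G1 := g1/(mu+g1)). set (G2 := g2/(mu+g2)).
  assert (A1 : G1 * S * u - s12 * R1 * v = R1).
  { unfold G1, u, v. apply (Rmult_eq_reg_l mu); [|lra].
    replace (mu * (g1 / (mu + g1) * S * (b1 * x / mu) - s12 * R1 * (b2 * w / mu)))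
      with (g1 * (b1*S*x)/(mu+g1) - b2*s12*w*R1) by (field; lra).
    replace (b1*S*x) with ((mu+g1)*I1) by lra. 
    replace (g1 * ((mu + g1) * I1) / (mu + g1)) with (g1*I1) by (field; lra). lra. }
  assert (A2 : G2 * S * v - s21 * R2 * u = R2).
  { unfold G2, u, v. apply (Rmult_eq_reg_l mu); [|lra].
    replace (mu * (g2 / (mu + g2) * S * (b2 * w / mu) - s21 * R2 * (b1 * x / mu)))
      with (g2 * (b2*S*w)/(mu+g2) - b1*s21*x*R2) by (field; lra).
    replace (b2*S*w) with ((mu+g2)*I2) by lra.
    replace (g2 * ((mu + g2) * I2) / (mu + g2)) with (g2*I2) by (field; lra). lra. }
  assert (AW : S * (1 + u + v) = 1).
  { unfold u, v. apply (Rmult_eq_reg_l mu); [|lra].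
    replace (mu * (S * (1 + b1 * x / mu + b2 * w / mu))) with (mu*S + b1*x*S + b2*w*S) by (field; lra).
    lra. }
  assert (HDu : Dl p S * u = R1 * (G2 * S + s12 * R2)).
  { unfold p, mkp, Dl; fold G1 G2. rewrite <- Ea1, <- Ea2.
    replace (G1 * G2 * (S * S) - (S + s21 * R2 - S) * (S + s12 * R1 - S))
      with (G1*G2*S*S - s12*s21*R1*R2) by ring.
    transitivity (G2*S*(G1 * S * u - s12 * R1 * v) + s12*R1*(G2 * S * v - s21 * R2 * u)); [ring|].
    rewrite A1, A2. ring. }
  assert (HDp : 0 < Dl p S).
  { assert (0 < R1 * (G2 * S + s12 * R2)).
    { apply Rmult_lt_0_compat; auto. assert (0 < G2) by (unfold G2; apply Rdiv_lt_0_compat; lra). nra. }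
    rewrite <- HDu in H. destruct (Rlt_le_dec 0 (Dl p S)) as [h|h]; auto. nra. }
  assert (HDv : Dl p S * v = R2 * (G1 * S + s21 * R1)).
  { unfold p, mkp, Dl; fold G1 G2. rewrite <- Ea1, <- Ea2.
    replace (G1 * G2 * (S * S) - (S + s21 * R2 - S) * (S + s12 * R1 - S))
      with (G1*G2*S*S - s12*s21*R1*R2) by ring.
    transitivity (G1*S*(G2 * S * v - s21 * R2 * u) + s21*R2*(G1 * S * u - s12 * R1 * v)); [ring|].
    rewrite A1, A2. ring. }
  assert (HD' : Dl p S <> 0) by lra.
  assert (Pa1 : pa1 p = S + s21*R2) by (unfold p; simpl; lra).
  assert (Pa2 : pa2 p = S + s12*R1) by (unfold p; simpl; lra).
  assert (PG1 : pG1 p = G1) by reflexivity. assert (PG2 : pG2 p = G2) by reflexivity.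
  assert (Ps1 : ps12 p = s12) by reflexivity. assert (Ps2 : ps21 p = s21) by reflexivity.
  assert (Eu : uf p S = u).
  { apply (Rmult_eq_reg_l (Dl p S)); auto. rewrite HDu. rewrite uf_eq.
    rewrite Pa1, Pa2, PG2, Ps1, Ps2. field. split; auto. }
  assert (Ev : vf p S = v).
  { apply (Rmult_eq_reg_l (Dl p S)); auto. rewrite HDv. rewrite vf_eq.
    rewrite Pa1, Pa2, PG1, Ps1, Ps2. field. split; auto. }
  assert (HF : Fc p S = 0).
  { rewrite (Fc_DG p S Hs1' Hs2' HD'), Eu, Ev, AW. ring. }
  split; [auto|]. split; [rewrite <- Pa1 in *; nra|]. split; [rewrite <- Pa2 in *; nra|].
  split; [auto|]. split; [auto|].
  unfold build. fold p. rewrite Eu, Ev. rewrite Pa1, Pa2.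
  assert (EJ1 : J1 = s21 * mu * u * R2 / (mu + g1)).
  { replace (s21*mu*u*R2/(mu+g1)) with ((b1*s21*R2*x)/(mu+g1)) by (unfold u; field; lra).
    replace (b1*s21*R2*x) with ((mu+g1)*J1) by lra. field; lra. }
  assert (EJ2 : J2 = s12 * mu * v * R1 / (mu + g2)).
  { replace (s12*mu*v*R1/(mu+g2)) with ((b2*s12*R1*w)/(mu+g2)) by (unfold v; field; lra).
    replace (b2*s12*R1*w) with ((mu+g2)*J2) by lra. field; lra. }
  assert (EI1 : I1 = mu * u * S / (mu + g1)).
  { replace (mu*u*S/(mu+g1)) with ((b1*S*x)/(mu+g1)) by (unfold u; field; lra).
    replace (b1*S*x) with ((mu+g1)*I1) by lra. field; lra. }
  assert (EI2 : I2 = mu * v * S / (mu + g2)).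
  { replace (mu*v*S/(mu+g2)) with ((b2*S*w)/(mu+g2)) by (unfold v; field; lra).
    replace (b2*S*w) with ((mu+g2)*I2) by lra. field; lra. }
  assert (ER3 : R3 = (g1*J1+g2*J2)/mu).
  { apply (Rmult_eq_reg_l mu); [|lra]. field_simplify; lra. }
  replace ((S + s21 * R2 - S) / s21) with R2 by (field; lra).
  replace ((S + s12 * R1 - S) / s12) with R1 by (field; lra).
  rewrite <- EJ1, <- EJ2, <- EI1, <- EI2, <- ER3. reflexivity.
Qed.

Definition c2z (p : prm) := let (a1,a2,G1,G2,s12,s21) := p in
  a1*(1-1/s12) + a2*(1-1/s21).

Lemma ps_id p S : ps12 p <> 0 -> ps21 p <> 0 -> pa1 p <> 0 -> pa2 p <> 0 ->
  ps (ps12 p) (ps21 p) (/ pa1 p) (/ pa2 p) S =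
  -(ps12 p * ps21 p/(pa1 p * pa2 p))*(Fc p S - cf3 p*S^3 - (cf2 p - c2z p)*S^2).
Proof.
  intros. rewrite Fc_poly by auto. destruct p as [a1 a2 G1 G2 s12 s21]; simpl in *.
  unfold ps. field. repeat split; auto.
Qed.

Lemma Fc_at_a2 p : ps12 p <> 0 -> ps21 p <> 0 -> pG2 p <> 0 ->
  Fc p (pa2 p) = pG1 p * pG2 p * pa2 p^2 * (pa2 p - 1 + (pa1 p - pa2 p)/(ps21 p * pG2 p)).
Proof. destruct p as [a1 a2 G1 G2 s12 s21]; simpl; intros. unfold Fc, Dl, Nn. field. repeat split; auto. Qed.

Lemma Fc_at_a1 p : ps12 p <> 0 -> ps21 p <> 0 -> pG1 p <> 0 ->
  Fc p (pa1 p) = pG1 p * pG2 p * pa1 p^2 * (pa1 p - 1 + (pa2 p - pa1 p)/(ps12 p * pG1 p)).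
Proof. destruct p as [a1 a2 G1 G2 s12 s21]; simpl; intros. unfold Fc, Dl, Nn. field. repeat split; auto. Qed.

Lemma frac_lt_inv N D aj : 0 < aj -> 0 < D -> (N/D < /aj <-> N*aj < D).
Proof.
  intros Ha HD. split; intro H.
  - apply (Rmult_lt_compat_r (D*aj)) in H; [|nra].
    replace (N/D*(D*aj)) with (N*aj) in H by (field; lra).
    replace (/aj*(D*aj)) with D in H by (field; lra). exact H.
  - apply (Rmult_lt_reg_r (D*aj)); [nra|].
    replace (N/D*(D*aj)) with (N*aj) by (field; lra).
    replace (/aj*(D*aj)) with D by (field; lra). exact H.
Qed.

Lemma omega_i_iff gi sij mu ai aj : 0 < gi -> 0 < mu -> 0 < sij -> 0 < ai -> 0 < aj ->
  (Omega_i gi sij mu (/ai) (/aj) <-> ai < 1 /\ aj < ai + sij*(gi/(mu+gi))*(1-ai)).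
Proof.
  intros Hg Hm Hs Hai Haj. unfold Omega_i.
  assert (Ht : ai * /ai = 1) by (field; lra).
  assert (Htp : 0 < /ai) by (apply Rinv_0_lt_compat; lra).
  assert (E1 : /ai > 1 <-> ai < 1).
  { split; intro h.
    - destruct (Rlt_le_dec ai 1) as [h'|h']; auto.
      assert (ai * /ai >= 1 * /ai) by (apply Rmult_ge_compat_r; lra). lra.
    - assert (ai * /ai < 1 * /ai) by (apply Rmult_lt_compat_r; lra). lra. }
  assert (E2 : ai < 1 -> (/aj > (gi+mu) * /ai / ((1+sij*(/ai-1))*gi + mu) <->
                         aj < ai + sij*(gi/(mu+gi))*(1-ai))).
  { intro h. assert (h' : 1 < /ai) by (apply E1; auto).
    assert (HD : 0 < (1+sij*(/ai-1))*gi + mu) by (assert (0 < sij*(/ai-1)) by (apply Rmult_lt_0_compat; lra); assert (0 < (1+sij*(/ai-1))*gi) by (apply Rmult_lt_0_compat; lra); lra).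
    unfold Rgt. rewrite (frac_lt_inv _ _ _ Haj HD).
    replace (ai + sij * (gi / (mu + gi)) * (1 - ai)) with ((ai*(mu+gi) + sij*gi*(1-ai))/(mu+gi))
      by (field; lra).
    assert (Hmg : 0 < mu + gi) by lra.
    split; intro H.
    - apply (Rmult_lt_reg_r (mu+gi)); [lra|].
      replace ((ai * (mu + gi) + sij * gi * (1 - ai)) / (mu + gi) * (mu + gi))
        with (ai * (mu + gi) + sij * gi * (1 - ai)) by (field; lra).
      apply (Rmult_lt_compat_r ai) in H; [|lra].
      replace ((gi + mu) * / ai * aj * ai) with ((gi+mu)*aj*(ai * /ai)) in H by ring.
      replace (((1 + sij * (/ ai - 1)) * gi + mu) * ai) with
        (ai*gi + sij*gi*(ai*/ai) - sij*gi*ai + mu*ai) in H by ring.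
      rewrite Ht in H. lra.
    - apply (Rmult_lt_reg_r ai); [lra|].
      replace ((gi + mu) * / ai * aj * ai) with ((gi+mu)*aj*(ai * /ai)) by ring.
      replace (((1 + sij * (/ ai - 1)) * gi + mu) * ai) with
        (ai*gi + sij*gi*(ai*/ai) - sij*gi*ai + mu*ai) by ring.
      rewrite Ht.
      apply (Rmult_lt_compat_r (mu+gi)) in H; [|lra].
      replace ((ai * (mu + gi) + sij * gi * (1 - ai)) / (mu + gi) * (mu + gi))
        with (ai * (mu + gi) + sij * gi * (1 - ai)) in H by (field; lra).
      lra. }
  split.
  - intros [h1 h2]. apply E1 in h1. split; auto. apply (E2 h1); auto.
  - intros [h1 h2]. split; [apply E1; auto|]. apply (E2 h1); auto.
Qed.

Lemma cond_case a1 a2 G1 G2 s12 s21 : 0 < a1 -> 0 < a2 -> 0 < G1 <= 1 -> 0 < G2 <= 1 ->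
  0 < s12 <= 1 -> 0 < s21 <= 1 -> a2 <= a1 ->
  ((a1 < 1 /\ a2 < a1 + s12*G1*(1-a1)) /\ (a2 < 1 /\ a1 < a2 + s21*G2*(1-a2)) <->
   a2 - 1 + (a1-a2)/(s21*G2) < 0).
Proof.
  intros. assert (Hk : 0 < s21*G2) by nra. assert (Hk1 : s21*G2 <= 1) by nra.
  assert (E : a2 - 1 + (a1-a2)/(s21*G2) < 0 <-> a1 < a2 + s21*G2*(1-a2)).
  { split; intro h.
    - apply (Rmult_lt_compat_r (s21*G2)) in h; [|lra].
      replace ((a2 - 1 + (a1 - a2) / (s21 * G2)) * (s21 * G2)) with ((a2-1)*(s21*G2) + (a1-a2)) in h
        by (field; lra). lra.
    - apply (Rmult_lt_reg_r (s21*G2)); [lra|].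
      replace ((a2 - 1 + (a1 - a2) / (s21 * G2)) * (s21 * G2)) with ((a2-1)*(s21*G2) + (a1-a2))
        by (field; lra). lra. }
  rewrite E. split.
  - intros [_ [_ h]]. auto.
  - intro h. assert (a2 < 1) by nra. assert (a1 < 1) by nra.
    assert (0 < s12*G1*(1-a1)) by (apply Rmult_lt_0_compat; nra).
    split; split; auto; lra.
Qed.

Lemma neg_prod_iff X Y : 0 < X -> (X * Y < 0 <-> Y < 0).
Proof. intros; split; intro h; nra. Qed.

Lemma omega_Fc b1 b2 g1 g2 s12 s21 mu : 0 < b1 -> 0 < b2 -> 0 < g1 -> 0 < g2 -> 0 < mu ->
  0 < s21 <= 1 -> 0 < s12 <= 1 ->
  let p := mkp b1 b2 g1 g2 s12 s21 mu in
  (Omega g1 g2 s12 s21 mu (/ pa1 p) (/ pa2 p) <-> Fc p (Rmin (pa1 p) (pa2 p)) < 0) /\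
  (Omega g1 g2 s12 s21 mu (/ pa1 p) (/ pa2 p) -> pa1 p < 1 /\ pa2 p < 1).
Proof.
  intros Hb1 Hb2 Hg1 Hg2 Hmu Hs21 Hs12 p.
  destruct (goodp_mkp b1 b2 g1 g2 s12 s21 mu Hg1 Hg2 Hmu Hs21 Hs12) as [Hg _].
  fold p in Hg. destruct Hg as (HG1&HG2&_&_).
  assert (Ha1 : 0 < pa1 p) by (unfold p; simpl; apply Rdiv_lt_0_compat; lra).
  assert (Ha2 : 0 < pa2 p) by (unfold p; simpl; apply Rdiv_lt_0_compat; lra).
  assert (EO : Omega g1 g2 s12 s21 mu (/ pa1 p) (/ pa2 p) <->
     (pa1 p < 1 /\ pa2 p < pa1 p + s12*pG1 p*(1-pa1 p)) /\
     (pa2 p < 1 /\ pa1 p < pa2 p + s21*pG2 p*(1-pa2 p))).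
  { unfold Omega. rewrite (omega_i_iff g1 s12 mu (pa1 p) (pa2 p)) by lra.
    rewrite (omega_i_iff g2 s21 mu (pa2 p) (pa1 p)) by lra. unfold p, mkp; simpl. tauto. }
  assert (Hs1' : ps12 p <> 0) by (unfold p; simpl; lra).
  assert (Hs2' : ps21 p <> 0) by (unfold p; simpl; lra).
  split.
  - rewrite EO. unfold Rmin. destruct (Rle_dec (pa1 p) (pa2 p)) as [h|h].
    + rewrite Fc_at_a1 by (auto; lra).
      rewrite neg_prod_iff by (apply Rmult_lt_0_compat; [nra| apply pow_lt; lra]).
      assert (0 < ps12 p <= 1) by (unfold p; simpl; lra).
      assert (0 < ps21 p <= 1) by (unfold p; simpl; lra).
      rewrite <- (cond_case (pa2 p) (pa1 p) (pG2 p) (pG1 p) (ps21 p) (ps12 p)) by (auto; lra).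
      unfold p, mkp; simpl. tauto.
    + rewrite Fc_at_a2 by (auto; lra).
      rewrite neg_prod_iff by (apply Rmult_lt_0_compat; [nra| apply pow_lt; lra]).
      assert (0 < ps12 p <= 1) by (unfold p; simpl; lra).
      assert (0 < ps21 p <= 1) by (unfold p; simpl; lra).
      rewrite <- (cond_case (pa1 p) (pa2 p) (pG1 p) (pG2 p) (ps12 p) (ps21 p)) by (auto; lra).
      unfold p, mkp; simpl. tauto.
  - rewrite EO. tauto.
Qed.

Lemma Rabs_le_intro x y : -y <= x <= y -> Rabs x <= y.
Proof. intros [h1 h2]. unfold Rabs; destruct (Rcase_abs x); lra. Qed.

Lemma ps_bound p S : 0 < pa1 p <= 1 -> 0 < pa2 p <= 1 -> goodp p -> 0 <= S <= 1 ->
  Fc p S = 0 ->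
  Rabs (ps (ps12 p) (ps21 p) (/ pa1 p) (/ pa2 p) S) <= 3*((1 - pG1 p) + (1 - pG2 p))/(pa1 p * pa2 p).
Proof.
  intros Ha1 Ha2 Hg HS HF.
  assert (Hc3 : 0 <= cf3 p).
  { destruct Hg as (HG1&HG2&Hs1&Hs2).
    destruct p as [a1 a2 G1 G2 s12 s21]; simpl in *.
    assert (0 <= (1-G2)/s12) by (apply div_nonneg; lra).
    assert (0 <= (1-G1)/s21) by (apply div_nonneg; lra).
    assert (1 - G2 <= (1-G2)/s12).
    { apply (Rmult_le_reg_l s12); [lra|]. replace (s12*((1-G2)/s12)) with (1-G2) by (field; lra). nra. }
    assert (1 - G1 <= (1-G1)/s21).
    { apply (Rmult_le_reg_l s21); [lra|]. replace (s21*((1-G1)/s21)) with (1-G1) by (field; lra). nra. }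
    nra. }
  destruct Hg as (HG1&HG2&Hs1&Hs2).
  rewrite ps_id by lra. rewrite HF.
  assert (Ed : cf2 p - c2z p = (1 - pG1 p*pG2 p) - pa1 p*((1-pG1 p)/ps21 p) - pa2 p*((1-pG2 p)/ps12 p)).
  { destruct p; simpl in *. field. lra. }
  rewrite Ed.
  destruct p as [a1 a2 G1 G2 s12 s21]; simpl in *.
  set (Q := (1-G1)/s21 + (1-G2)/s12).
  assert (E3 : G1*G2 - 1 + (1-G2)/s12 + (1-G1)/s21 <= Q) by (unfold Q; nra).

  assert (HQ1 : 0 <= (1-G1)/s21) by (apply div_nonneg; lra).
  assert (HQ2 : 0 <= (1-G2)/s12) by (apply div_nonneg; lra).
  assert (1 - G2 <= (1-G2)/s12).
  { apply (Rmult_le_reg_l s12); [lra|]. replace (s12*((1-G2)/s12)) with (1-G2) by (field; lra). nra. }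
  assert (1 - G1 <= (1-G1)/s21).
  { apply (Rmult_le_reg_l s21); [lra|]. replace (s21*((1-G1)/s21)) with (1-G1) by (field; lra). nra. }
  assert (HG12 : 0 <= 1 - G1*G2 <= Q) by (unfold Q; nra).
  set (c3v := G1 * G2 - 1 + (1 - G2) / s12 + (1 - G1) / s21) in *.
  set (dv := 1 - G1 * G2 - a1 * ((1 - G1) / s21) - a2 * ((1 - G2) / s12)).
  assert (Hdv : -2*Q <= dv <= 2*Q).
  { unfold dv. split.
    - assert (a1 * ((1 - G1) / s21) <= (1 - G1) / s21) by nra.
      assert (a2 * ((1 - G2) / s12) <= (1 - G2) / s12) by nra. unfold Q in *. lra.
    - assert (0 <= a1 * ((1 - G1) / s21)) by nra.
      assert (0 <= a2 * ((1 - G2) / s12)) by nra. unfold Q in *. lra. }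
  assert (HS2 : 0 <= S^2 <= 1) by (split; nra).
  assert (HS3 : 0 <= S^3 <= 1) by (split; nra).
  assert (HA : Rabs (- (0 - c3v * S ^ 3 - dv * S ^ 2)) <= 3*Q).
  { apply Rabs_le_intro. split; nra. }
  assert (Hk : 0 < s12 * s21 / (a1 * a2)).
  { apply Rdiv_lt_0_compat; nra. }
  match goal with |- Rabs ?X <= _ =>
    replace X with ((s12 * s21 / (a1 * a2)) * (- (0 - c3v * S ^ 3 - dv * S ^ 2))) by ring end.
  rewrite Rabs_mult, (Rabs_right (s12 * s21 / (a1 * a2))) by lra.
  apply Rle_trans with ((s12 * s21 / (a1 * a2)) * (3*Q)).
  { apply Rmult_le_compat_l; lra. }
  unfold Q. replace (s12 * s21 / (a1 * a2) * (3 * ((1 - G1) / s21 + (1 - G2) / s12)))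
    with (3*(s12*(1-G1) + s21*(1-G2))/(a1*a2)) by (field; repeat split; lra).
  unfold Rdiv. apply Rmult_le_compat_r.
  { left; apply Rinv_0_lt_compat; nra. }
  nra.
Qed.

Lemma quad_root A B k s0 S E : 0 <= A -> 0 < k -> 0 < s0 -> A*s0^2 + B*s0 - k = 0 ->
  0 < A + B - k -> 0 <= S -> Rabs (A*S^2 + B*S - k) <= E -> s0 < 1 /\ Rabs (S - s0) <= E/k.
Proof.
  intros HA Hk Hs0 Hr H1 HS HE.
  assert (Hk0 : A*s0 + B = k/s0).
  { apply (Rmult_eq_reg_l s0); [|lra]. field_simplify; [|lra]. lra. }
  assert (Hks : 0 < k/s0) by (apply Rdiv_lt_0_compat; lra).
  assert (Hlt : s0 < 1).
  { assert (E1 : A + B - k = (1 - s0)*(A*(1+s0) + B)) by (transitivity (A+B-k - (A*s0^2+B*s0-k)); [rewrite Hr; ring | ring]).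
    assert (0 < A*(1+s0)+B) by nra.
    destruct (Rlt_le_dec s0 1) as [h|h]; auto. nra. }
  split; auto.
  assert (Hk1 : k <= k/s0).
  { apply (Rmult_le_reg_l s0); [lra|]. replace (s0*(k/s0)) with k by (field; lra). nra. }
  assert (Hq : A*S^2 + B*S - k = (S - s0)*(A*(S+s0)+B)) by (transitivity (A*S^2+B*S-k - (A*s0^2+B*s0-k)); [rewrite Hr; ring | ring]).
  rewrite Hq, Rabs_mult in HE.
  assert (HP : k <= A*(S+s0)+B) by nra.
  rewrite (Rabs_right (A*(S+s0)+B)) in HE by lra.
  apply (Rmult_le_reg_r k); [lra|]. replace (E/k*k) with E by (field; lra).
  assert (0 <= Rabs (S - s0)) by apply Rabs_pos. nra.
Qed.

Lemma asymI g s a S s0 mu c l : 0 < g -> 0 < s <= 1 -> 0 < mu -> 0 < S -> S <= a -> a <= 1 ->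
  0 < s0 < 1 -> 0 < l <= a -> 0 <= c -> Rabs (S - s0) <= c*mu ->
  Rabs (mu*((a-S)*(S+s*(1-S))/(s*((mu+g)*a - mu*S))) - mu*((s0+s*(1-s0))/(g*s)*(1 - /a*s0)))
  <= ((g*c+1)/(s*g^2*l^2))*mu^2.
Proof.
  intros Hg Hs Hmu HS HSa Ha Hs0 Hl Hc Hb.
  set (D1 := (mu+g)*a - mu*S).
  assert (HD1 : g*a <= D1) by (unfold D1; nra).
  assert (Hga : 0 < g*a) by nra.
  set (W := s - (1-s)*(a-S-s0)).
  set (V := (a-S)*(a-s0)*(s0+s*(1-s0))).
  assert (Eq : (a-S)*(S+s*(1-S))/(s*D1) - (s0+s*(1-s0))/(g*s)*(1 - /a*s0)
               = (g*a*(s0-S)*W - mu*V)/(s*g*a*D1)).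
  { unfold W, V, D1 in *. field. repeat split; nra. }
  assert (HW : Rabs W <= 1).
  { apply Rabs_le_intro. unfold W. split; nra. }
  assert (HV : Rabs V <= 1).
  { apply Rabs_le_intro. unfold V.
    assert (0 <= a - S <= 1) by lra. assert (-1 <= a - s0 <= 1) by lra.
    assert (0 <= s0 + s*(1-s0) <= 1) by nra.
    assert (-1 <= (a-S)*(a-s0) <= 1) by nra. split; nra. }
  assert (Hnum : Rabs (g*a*(s0-S)*W - mu*V) <= (g*c+1)*mu).
  { unfold Rminus at 1. eapply Rle_trans; [apply Rabs_triang|].
    rewrite Rabs_Ropp, !Rabs_mult. rewrite (Rabs_right g) by lra.
    rewrite (Rabs_right a) by lra. rewrite (Rabs_right mu) by lra.
    rewrite <- Rabs_Ropp, Ropp_minus_distr in Hb.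
    assert (0 <= Rabs (s0 - S)) by apply Rabs_pos. assert (0 <= Rabs W) by apply Rabs_pos.
    assert (0 <= Rabs V) by apply Rabs_pos.
    assert (g*a*Rabs (s0-S)*Rabs W <= g*a*(c*mu)*1).
    { apply Rmult_le_compat; try nra. }
    assert (g*a*(c*mu) <= g*c*mu).
    { assert (0 <= (g*c*mu)*(1-a)) by (apply Rmult_le_pos; [repeat apply Rmult_le_pos|]; lra). nra. }
    assert (mu*Rabs V <= mu) by nra. nra. }
  fold D1. rewrite <- Rmult_minus_distr_l, Rabs_mult, (Rabs_right mu) by lra. rewrite Eq.
  assert (Hden : 0 < s*g*a*D1) by (repeat apply Rmult_lt_0_compat; nra).
  unfold Rdiv. rewrite Rabs_mult, (Rabs_right (/ (s*g*a*D1))) by (left; apply Rinv_0_lt_compat; lra).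
  assert (Hden2 : s*g^2*l^2 <= s*g*a*D1).
  { assert (l^2 <= a*a) by nra. assert (g*(g*a) <= g*D1) by nra.
    replace (s*g*a*D1) with (s*(a*(g*D1))) by ring.
    replace (s*g^2*l^2) with (s*(l^2*(g*g))) by ring.
    apply Rmult_le_compat_l; [lra|]. nra. }
  assert (Hsgl : 0 < s*g^2*l^2) by (repeat apply Rmult_lt_0_compat; nra).
  assert (Hinv : / (s*g*a*D1) <= / (s*g^2*l^2)) by (apply Rinv_le_contravar; lra).
  assert (0 <= Rabs (g*a*(s0-S)*W - mu*V)) by apply Rabs_pos.
  assert (0 < / (s*g*a*D1)) by (apply Rinv_0_lt_compat; lra).
  apply Rle_trans with (mu * ((g*c+1)*mu * / (s*g^2*l^2))).
  { apply Rmult_le_compat_l; [lra|]. apply Rmult_le_compat; nra. }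
  right. field. lra.
Qed.

Lemma build_I b1 b2 g1 g2 s12 s21 mu S :
  0 < b1 -> 0 < b2 -> 0 < g1 -> 0 < g2 -> 0 < mu -> 0 < s21 <= 1 -> 0 < s12 <= 1 ->
  let p := mkp b1 b2 g1 g2 s12 s21 mu in
  0 < S -> S < pa1 p -> S < pa2 p -> 0 < Dl p S -> Fc p S = 0 ->
  let x := build b1 b2 g1 g2 s12 s21 mu S in
  sI1 x = mu*((pa2 p - S)*(S+s12*(1-S))/(s12*((mu+g1)*pa2 p - mu*S))) /\
  sI2 x = mu*((pa1 p - S)*(S+s21*(1-S))/(s21*((mu+g2)*pa1 p - mu*S))).
Proof.
  intros Hb1 Hb2 Hg1 Hg2 Hmu Hs21 Hs12 p HS Ha1 Ha2 HD HF x.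
  assert (Hs1' : ps12 p <> 0) by (unfold p; simpl; lra).
  assert (Hs2' : ps21 p <> 0) by (unfold p; simpl; lra).
  assert (HD' : Dl p S <> 0) by lra.
  destruct (uv_sys p S Hs1' Hs2' HD') as [K1 K2].
  pose proof (Fc_DG p S Hs1' Hs2' HD') as HFD. rewrite HF in HFD.
  assert (HW : S * (1 + uf p S + vf p S) = 1).
  { symmetry in HFD. apply Rmult_integral in HFD; destruct HFD as [h|h]; lra. }
  unfold x, build. fold p. cbn [sI1 sI2].
  revert K1 K2 HW. generalize (uf p S) (vf p S). intros u v K1 K2 HW.
  unfold p, mkp in *; simpl in *.
  set (a1 := (g1+mu)/b1) in *. set (a2 := (g2+mu)/b2) in *.
  set (G1 := g1/(mu+g1)) in *. set (G2 := g2/(mu+g2)) in *.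
  assert (HG1 : 0 < G1) by (unfold G1; apply Rdiv_lt_0_compat; lra).
  assert (HG2 : 0 < G2) by (unfold G2; apply Rdiv_lt_0_compat; lra).
  assert (U : u*S*(G1*S + s12*((a2-S)/s12)) = (a2-S)/s12*(S + s12*(1-S))).
  { transitivity (S*(G1*u*S) + s12*((a2-S)/s12)*(u*S)); [ring|]. rewrite K1.
    transitivity ((a2-S)/s12*(s12*(S*(1+u+v)) - s12*S + S)); [ring|]. rewrite HW; ring. }
  assert (V : v*S*(G2*S + s21*((a1-S)/s21)) = (a1-S)/s21*(S + s21*(1-S))).
  { transitivity (S*(G2*v*S) + s21*((a1-S)/s21)*(v*S)); [ring|]. rewrite K2.
    transitivity ((a1-S)/s21*(s21*(S*(1+v+u)) - s21*S + S)); [ring|].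
    replace (1+v+u) with (1+u+v) by ring. rewrite HW; ring. }
  assert (P1 : 0 < G1*S + s12*((a2-S)/s12)).
  { replace (s12*((a2-S)/s12)) with (a2-S) by (field; lra). assert (0 < G1*S) by (apply Rmult_lt_0_compat; lra). lra. }
  assert (P2 : 0 < G2*S + s21*((a1-S)/s21)).
  { replace (s21*((a1-S)/s21)) with (a1-S) by (field; lra). assert (0 < G2*S) by (apply Rmult_lt_0_compat; lra). lra. }
  assert (Eu : u*S = (a2-S)/s12*(S + s12*(1-S)) / (G1*S + s12*((a2-S)/s12))).
  { rewrite <- U. set (Dn := G1*S + s12*((a2-S)/s12)) in *. field. lra. }
  assert (Ev : v*S = (a1-S)/s21*(S + s21*(1-S)) / (G2*S + s21*((a1-S)/s21))).
  { rewrite <- V. set (Dn := G2*S + s21*((a1-S)/s21)) in *. field. lra. }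
  assert (Q1 : 0 < (mu+g1)*a2 - mu*S) by nra.
  assert (Q2 : 0 < (mu+g2)*a1 - mu*S) by nra.
  split.
  - replace (mu*u*S/(mu+g1)) with (mu*(u*S)/(mu+g1)) by (field; lra). rewrite Eu.
    unfold G1. field. repeat split; try lra.
  - replace (mu*v*S/(mu+g2)) with (mu*(v*S)/(mu+g2)) by (field; lra). rewrite Ev.
    unfold G2. field. repeat split; try lra.
Qed.

Lemma ps_eq s12 s21 R1 R2 s : ps s12 s21 R1 R2 s =
  (s12*(1-s21)*R1 + s21*(1-s12)*R2)*s^2 + (s12*s21*(R1+R2) - (s12+s21-s12*s21))*s - s12*s21.
Proof. unfold ps. ring. Qed.

Lemma frac_mono x y z : 0 <= x -> 0 < z -> z <= y -> x / y <= x / z.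
Proof. intros. unfold Rdiv. apply Rmult_le_compat_l; auto. apply Rinv_le_contravar; auto. Qed.

Lemma M_bound b1 b2 g1 g2 mu : 0 < b1 -> 0 < b2 -> 0 < g1 -> 0 < g2 -> 0 < mu ->
  3*((1 - g1/(mu+g1)) + (1 - g2/(mu+g2)))/((g1+mu)/b1 * ((g2+mu)/b2))
  <= (3*(b1*b2/(g1*g2))*(1/g1+1/g2))*mu.
Proof.
  intros. replace (3*((1 - g1/(mu+g1)) + (1 - g2/(mu+g2)))/((g1+mu)/b1 * ((g2+mu)/b2)))
   with (3*(mu/(mu+g1) + mu/(mu+g2))*((b1*b2)/((g1+mu)*(g2+mu)))) by (field; lra).
  replace ((3*(b1*b2/(g1*g2))*(1/g1+1/g2))*mu) with (3*(mu/g1 + mu/g2)*((b1*b2)/(g1*g2)))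
    by (field; lra).
  assert (mu/(mu+g1) <= mu/g1) by (apply frac_mono; lra).
  assert (mu/(mu+g2) <= mu/g2) by (apply frac_mono; lra).
  assert ((b1*b2)/((g1+mu)*(g2+mu)) <= (b1*b2)/(g1*g2)) by (apply frac_mono; nra).
  assert (0 <= mu/(mu+g1)) by (apply div_nonneg; lra).
  assert (0 <= mu/(mu+g2)) by (apply div_nonneg; lra).
  assert (0 <= (b1*b2)/((g1+mu)*(g2+mu))) by (apply div_nonneg; nra).
  apply Rmult_le_compat; try nra.
Qed.

Theorem proposition4p1 (beta1 beta2 gamma1 gamma2 sigma12 sigma21 : R) :
  0 < beta1 -> 0 < beta2 -> 0 < gamma1 -> 0 < gamma2 ->
  0 < sigma21 -> sigma21 <= sigma12 -> sigma12 <= 1 ->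
  exists mustar : R, 0 < mustar /\ mustar < Rmin gamma1 gamma2 /\
  (exists C : R, 0 < C /\
   forall mu : R, 0 < mu -> mu < mustar ->
   let Rn1 := repr_num beta1 gamma1 mu in
   let Rn2 := repr_num beta2 gamma2 mu in
   Omega gamma1 gamma2 sigma12 sigma21 mu Rn1 Rn2 ->
   exists x : state,
     (steady_state beta1 beta2 gamma1 gamma2 sigma12 sigma21 mu x /\
      feasible x /\ 0 < sI1 x /\ 0 < sI2 x) /\
     (forall y : state,
        steady_state beta1 beta2 gamma1 gamma2 sigma12 sigma21 mu y ->
        feasible y -> 0 < sI1 y -> 0 < sI2 y -> y = x) /\
     (forall s0 : R, 0 < s0 -> ps sigma12 sigma21 Rn1 Rn2 s0 = 0 ->
        Rabs (sS x - s0) <= C * mu /\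
        Rabs (sI1 x - mu * coef_b1 gamma1 sigma12 Rn2 s0) <= C * mu ^ 2 /\
        Rabs (sI2 x - mu * coef_b2 gamma2 sigma21 Rn1 s0) <= C * mu ^ 2)) /\
  (forall mu : R, 0 < mu -> mu < mustar ->
   let Rn1 := repr_num beta1 gamma1 mu in
   let Rn2 := repr_num beta2 gamma2 mu in
   ~ Omega gamma1 gamma2 sigma12 sigma21 mu Rn1 Rn2 ->
   ~ exists x : state,
       steady_state beta1 beta2 gamma1 gamma2 sigma12 sigma21 mu x /\
       feasible x /\ 0 < sI1 x /\ 0 < sI2 x).
Proof.
  rename beta1 into b1, beta2 into b2, gamma1 into g1, gamma2 into g2,
    sigma12 into s12, sigma21 into s21.
  intros Hb1 Hb2 Hg1 Hg2 Hs21 H2112 Hs12.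
  assert (Hs21' : 0 < s21 <= 1) by lra. assert (Hs12' : 0 < s12 <= 1) by lra.
  assert (Hmin : 0 < Rmin g1 g2) by (apply Rmin_glb_lt; lra).
  exists (Rmin g1 g2 / 2). split; [lra|]. split; [lra|].
  set (M := 3*(b1*b2/(g1*g2))*(1/g1+1/g2)).
  assert (HM : 0 < M).
  { unfold M. apply Rmult_lt_0_compat.
    - apply Rmult_lt_0_compat; [lra|]. apply Rdiv_lt_0_compat; nra.
    - assert (0 < 1/g1) by (apply Rdiv_lt_0_compat; lra).
      assert (0 < 1/g2) by (apply Rdiv_lt_0_compat; lra). lra. }
  set (C1 := M/(s12*s21)).
  assert (HC1 : 0 < C1) by (apply Rdiv_lt_0_compat; nra).
  set (l1 := g1/b1). set (l2 := g2/b2).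
  assert (Hl1 : 0 < l1) by (apply Rdiv_lt_0_compat; lra).
  assert (Hl2 : 0 < l2) by (apply Rdiv_lt_0_compat; lra).
  set (K1 := (g1*C1+1)/(s12*g1^2*l2^2)).
  set (K2 := (g2*C1+1)/(s21*g2^2*l1^2)).
  assert (HK1 : 0 < K1).
  { unfold K1. apply Rdiv_lt_0_compat. { assert (0 < g1*C1) by (apply Rmult_lt_0_compat; lra). lra. } apply Rmult_lt_0_compat; [apply Rmult_lt_0_compat|]; try apply pow_lt; lra. }
  assert (HK2 : 0 < K2).
  { unfold K2. apply Rdiv_lt_0_compat. { assert (0 < g2*C1) by (apply Rmult_lt_0_compat; lra). lra. } apply Rmult_lt_0_compat; [apply Rmult_lt_0_compat|]; try apply pow_lt; lra. }
  split.
  - exists (C1 + K1 + K2). split; [lra|].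
    intros mu Hmu Hmus Rn1 Rn2 HOm.
    set (p := mkp b1 b2 g1 g2 s12 s21 mu).
    assert (Ha1 : 0 < pa1 p) by (unfold p; simpl; apply Rdiv_lt_0_compat; lra).
    assert (Ha2 : 0 < pa2 p) by (unfold p; simpl; apply Rdiv_lt_0_compat; lra).
    assert (ER1 : Rn1 = / pa1 p) by (unfold Rn1, repr_num, p; simpl; field; lra).
    assert (ER2 : Rn2 = / pa2 p) by (unfold Rn2, repr_num, p; simpl; field; lra).
    rewrite ER1, ER2 in HOm.
    destruct (omega_Fc b1 b2 g1 g2 s12 s21 mu Hb1 Hb2 Hg1 Hg2 Hmu Hs21' Hs12') as [EO Hlt].
    fold p in EO, Hlt.
    pose proof (proj1 EO HOm) as HFm. destruct (Hlt HOm) as [Ha1' Ha2'].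
    destruct (goodp_mkp b1 b2 g1 g2 s12 s21 mu Hg1 Hg2 Hmu Hs21' Hs12') as [Hg [HG1 HG2]].
    fold p in Hg, HG1, HG2.
    assert (Hm : 0 < Rmin (pa1 p) (pa2 p)) by (apply Rmin_glb_lt; lra).
    destruct (exist_root p (Rmin (pa1 p) (pa2 p)) Hg ltac:(lra) ltac:(lra) Hm
      (Rmin_l _ _) (Rmin_r _ _) HFm) as [r [Hr [HFr HDr]]].
    assert (Hr1 : r < pa1 p) by (pose proof (Rmin_l (pa1 p) (pa2 p)); lra).
    assert (Hr2 : r < pa2 p) by (pose proof (Rmin_r (pa1 p) (pa2 p)); lra).
    pose proof (build_ok b1 b2 g1 g2 s12 s21 mu r Hb1 Hb2 Hg1 Hg2 Hmu Hs21' Hs12'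
      ltac:(lra) Hr1 Hr2 HDr HFr) as Hok.
    exists (build b1 b2 g1 g2 s12 s21 mu r). split; [exact Hok|]. split.
    + intros y Hy Hfy HI1 HI2.
      destruct (steady_inv b1 b2 g1 g2 s12 s21 mu y Hb1 Hb2 Hg1 Hg2 Hmu Hs21' Hs12' Hy Hfy HI1 HI2)
        as (HS&HS1&HS2&HDS&HFS&Hyb).
      fold p in HS1, HS2, HDS, HFS.
      rewrite Hyb. f_equal.
      apply (uniq_root p); auto; lra.
    + intros s0 Hs0 Hps. rewrite ER1, ER2 in Hps |- *.
      pose proof (ps_bound p r ltac:(lra) ltac:(lra) Hg ltac:(lra) HFr) as Hpb.
      assert (HMb : 3*((1 - pG1 p) + (1 - pG2 p))/(pa1 p * pa2 p) <= M*mu)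
        by (unfold p, M; simpl; apply M_bound; lra).
      rewrite ps_eq in Hps, Hpb. unfold p at 1 2 in Hpb. simpl ps12 in Hpb. simpl ps21 in Hpb.
      assert (Hi1 : 1 < / pa1 p).
      { assert (pa1 p * / pa1 p = 1) by (field; lra).
        assert (pa1 p * / pa1 p < 1 * / pa1 p) by (apply Rmult_lt_compat_r; [apply Rinv_0_lt_compat|]; lra).
        lra. }
      assert (Hi2 : 1 < / pa2 p).
      { assert (pa2 p * / pa2 p = 1) by (field; lra).
        assert (pa2 p * / pa2 p < 1 * / pa2 p) by (apply Rmult_lt_compat_r; [apply Rinv_0_lt_compat|]; lra).
        lra. }
      destruct (quad_root (s12*(1-s21)* / pa1 p + s21*(1-s12)* / pa2 p)
                  (s12*s21*(/ pa1 p + / pa2 p) - (s12+s21-s12*s21)) (s12*s21) s0 r (M*mu))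
        as [Hs01 Hrs].
      { assert (0 <= s12*(1-s21)) by nra. assert (0 <= s21*(1-s12)) by nra. nra. }
      { nra. }
      { lra. }
      { lra. }
      { nra. }
      { lra. }
      { lra. }
      assert (Hrs' : Rabs (r - s0) <= C1 * mu).
      { replace (C1*mu) with (M*mu/(s12*s21)) by (unfold C1; field; lra). exact Hrs. }
      destruct (build_I b1 b2 g1 g2 s12 s21 mu r Hb1 Hb2 Hg1 Hg2 Hmu Hs21' Hs12'
        ltac:(lra) Hr1 Hr2 HDr HFr) as [EI1 EI2].
      fold p in EI1, EI2.
      assert (Hmu2 : 0 <= mu^2) by (apply pow_le; lra).
      split; [|split].
      * simpl. apply Rle_trans with (C1*mu); auto. nra.
      * rewrite EI1. unfold coef_b1.
        assert (Hl2a : 0 < l2 <= pa2 p).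
        { split; auto. unfold l2, p; simpl. unfold Rdiv. apply Rmult_le_compat_r;
            [left; apply Rinv_0_lt_compat|]; lra. }
        pose proof (asymI g1 s12 (pa2 p) r s0 mu C1 l2 Hg1 Hs12' Hmu ltac:(lra) ltac:(lra)
          ltac:(lra) ltac:(lra) Hl2a ltac:(lra) Hrs') as Ha.
        fold K1 in Ha. apply Rle_trans with (K1*mu^2); auto. nra.
      * rewrite EI2. unfold coef_b2.
        assert (Hl1a : 0 < l1 <= pa1 p).
        { split; auto. unfold l1, p; simpl. unfold Rdiv. apply Rmult_le_compat_r;
            [left; apply Rinv_0_lt_compat|]; lra. }
        pose proof (asymI g2 s21 (pa1 p) r s0 mu C1 l1 Hg2 Hs21' Hmu ltac:(lra) ltac:(lra)
          ltac:(lra) ltac:(lra) Hl1a ltac:(lra) Hrs') as Ha.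
        fold K2 in Ha. apply Rle_trans with (K2*mu^2); auto. nra.
  - intros mu Hmu Hmus Rn1 Rn2 HnOm [y [Hy [Hfy [HI1 HI2]]]].
    set (p := mkp b1 b2 g1 g2 s12 s21 mu).
    assert (ER1 : Rn1 = / pa1 p) by (unfold Rn1, repr_num, p; simpl; field; lra).
    assert (ER2 : Rn2 = / pa2 p) by (unfold Rn2, repr_num, p; simpl; field; lra).
    rewrite ER1, ER2 in HnOm.
    destruct (omega_Fc b1 b2 g1 g2 s12 s21 mu Hb1 Hb2 Hg1 Hg2 Hmu Hs21' Hs12') as [EO _].
    fold p in EO.
    destruct (goodp_mkp b1 b2 g1 g2 s12 s21 mu Hg1 Hg2 Hmu Hs21' Hs12') as [Hg [HG1 HG2]].
    fold p in Hg, HG1, HG2.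
    destruct (steady_inv b1 b2 g1 g2 s12 s21 mu y Hb1 Hb2 Hg1 Hg2 Hmu Hs21' Hs12' Hy Hfy HI1 HI2)
      as (HS&HS1&HS2&HDS&HFS&_).
    fold p in HS1, HS2, HDS, HFS.
    assert (HFm : 0 <= Fc p (Rmin (pa1 p) (pa2 p))).
    { destruct (Rlt_le_dec (Fc p (Rmin (pa1 p) (pa2 p))) 0) as [h|h]; auto.
      exfalso. apply HnOm. apply EO. exact h. }
    apply (no_root p (Rmin (pa1 p) (pa2 p)) (sS y) Hg HG1 HG2 (Rmin_l _ _) (Rmin_r _ _) HFm HS); auto.
    apply Rmin_glb_lt; auto.
Qed.
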